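(* Let $\Bbbk$ be algebraically closed, $T$ a torus acting linearly on a finite-dimensional $\Bbbk$-vector space $V$, $X\subseteq\mathbb PV$ a closed $T$-invariant subscheme with $X^T$ finite, and $S:\mathbb G_m\to T$ with $X^S=X^T$. If $Y\subseteq X$ is an irreducible component, then its unique supporting fixed point $\min(Y)$ is also a supporting fixed point of $X$. In particular, for every $f\in X^T$, every irreducible component of $\overline{X_f}$ contains $f$.
   Context: For a closed $S$-invariant subset $Z\subseteq X$ and $f\in Z^T$, $Z_f=\{z\in Z:\lim_{t\to0}S(t)\cdot z=f\}$ is the B-B stratum. A point $f\in Z^T$ is a supporting fixed point of $Z$ if $Z_f$ contains a nonempty open subset of $Z$. An irreducible $Y$ has exactly one supporting fixed point, denoted $\min(Y)$. *)

(* Defs.v *)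
From HB Require Import structures.
From mathcomp Require Import all_boot all_order all_algebra.
From mathcomp Require Import mpoly.
Set Implicit Arguments. Unset Strict Implicit. Unset Printing Implicit Defensive.
Import Order.TTheory GRing.Theory Num.Theory.
Local Open Scope ring_scope.

(* Setting: K algebraically closed, V = K^n with a fixed basis, P(V) = nonzero
   vectors of K^n up to nonzero scaling.  A torus T = (K^* )^r acts linearly on V;
   a linear action of a torus is diagonalizable, so in a suitable basis the
   action is t . x = (chi_i(t) x_i)_i for characters chi_i = w i : Z^r.
   Subsets of P(V) are represented by predicates on vectors (cones). *)

Section Defs.
Variables (K : closedFieldType) (n r : nat) (w : 'I_n -> 'I_r -> int).

Definition vec := 'I_n -> K.

Definition proj (x y : vec) : Prop :=
  (exists i, x i != 0) /\ exists c : K, c != 0 /\ forall i, y i = c * x i.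

Definition torus_elt (t : 'I_r -> K) : Prop := forall j, t j != 0.

Definition chi (i : 'I_n) (t : 'I_r -> K) : K := \prod_(j < r) (t j ^ (w i j)).

Definition act (t : 'I_r -> K) (x : vec) : vec := fun i => chi i t * x i.

Definition Sof (lam : 'I_r -> int) (s : K) : 'I_r -> K := fun j => s ^ lam j.

Definition pset := vec -> Prop.

Definition pfinite (A : pset) : Prop :=
  exists s : seq vec, forall f, A f ->
    exists i : 'I_(size s), proj f (nth (fun _ => 0) s i).
Definition subset (A B : pset) : Prop := forall x, A x -> B x.

Definition zclosed (C : pset) : Prop :=
  exists E : mpoly.mpoly n K -> Prop,
    (forall p, E p -> exists d : nat, p \is [in K[n], d.-homog]) /\
    forall x, C x <-> ((exists i, x i != 0) /\ forall p, E p -> mpoly.meval x p = 0).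

Definition open_in (Z U : pset) : Prop :=
  exists C, zclosed C /\ forall x, U x <-> (Z x /\ ~ C x).

Definition zclosure (A : pset) : pset :=
  fun x => (exists i, x i != 0) /\ forall C, zclosed C -> subset A C -> C x.

Definition irreducible (Y : pset) : Prop :=
  (exists y, Y y) /\
  forall C1 C2, zclosed C1 -> zclosed C2 ->
    subset Y (fun x => C1 x \/ C2 x) -> subset Y C1 \/ subset Y C2.

Definition irr_component (Z Y : pset) : Prop :=
  zclosed Y /\ irreducible Y /\ subset Y Z /\
  forall Y', zclosed Y' -> irreducible Y' -> subset Y Y' -> subset Y' Z -> subset Y' Y.

Definition Tfixed (Z : pset) (f : vec) : Prop :=
  Z f /\ forall t, torus_elt t -> proj f (act t f).

Definition Sfixed (lam : 'I_r -> int) (Z : pset) (f : vec) : Prop :=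
  Z f /\ forall s : K, s != 0 -> proj f (act (Sof lam s) f).

(* lim_{s -> 0} S(s).z = f : the orbit map G_m -> P(V), s |-> S(s).z, extends
   to a morphism A^1 -> P(V) (given by polynomials p_i without common zero)
   whose value at 0 is f. *)
Definition limit0 (lam : 'I_r -> int) (z f : vec) : Prop :=
  exists p : 'I_n -> {poly K},
    (forall a : K, exists i, (p i).[a] != 0) /\
    (forall s : K, s != 0 -> proj (act (Sof lam s) z) (fun i => (p i).[s])) /\
    proj f (fun i => (p i).[0]).

Definition BBstratum (lam : 'I_r -> int) (Z : pset) (f : vec) : pset :=
  fun z => Z z /\ limit0 lam z f.

Definition supporting (lam : 'I_r -> int) (Z : pset) (f : vec) : Prop :=
  Tfixed Z f /\
  exists U, open_in Z U /\ (exists u, U u) /\ subset U (BBstratum lam Z f).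

End Defs.

(* Main.v *)
Require Import Defs.
From HB Require Import structures.
From mathcomp Require Import all_boot all_order all_algebra.
From mathcomp Require Import mpoly.
From Stdlib Require Import Classical IndefiniteDescription FunctionalExtensionality.
Import Order.TTheory GRing.Theory.
Local Open Scope ring_scope.
Set Implicit Arguments. Unset Strict Implicit. Unset Printing Implicit Defensive.
Local Notation psubset := Defs.subset.

Lemma nat_subseq (a : nat -> nat) : exists psi : nat -> nat,
  (forall i, (psi i < psi i.+1)%N) /\ (forall i, (a (psi i) <= a (psi i.+1))%N).
Proof.
have hmin : forall p, exists j, (p < j)%N /\ forall j', (p < j')%N -> (a j <= a j')%N.
  move=> p; suff H : forall v j, (p < j)%N -> (a j <= v)%N ->
      exists j0, (p < j0)%N /\ forall j', (p < j')%N -> (a j0 <= a j')%N.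
    exact: (H (a p.+1) p.+1).
  elim=> [|v IH] j pj aj.
    by exists j; split=> // j' _; move: aj; rewrite leqn0 => /eqP ->.
  case: (classic (exists j', (p < j')%N /\ (a j' <= v)%N)) => [[j' [h1 h2]]|hn].
    exact: IH h1 h2.
  exists j; split=> // j' pj'; rewrite leqNgt; apply/negP=> lt.
  by apply: hn; exists j'; split=> //; rewrite -ltnS (leq_trans lt aj).
pose nx p := proj1_sig (constructive_indefinite_description _ (hmin p)).
have Hnx p : (p < nx p)%N /\ forall j', (p < j')%N -> (a (nx p) <= a j')%N.
  exact: (proj2_sig (constructive_indefinite_description _ (hmin p))).
exists (fun i => iter i.+1 nx 0%N); split=> i /=.
  by case: (Hnx (nx (iter i nx 0%N))).
case: (Hnx (iter i nx 0%N)) => h1 h2; apply: h2.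
apply: (ltn_trans h1); by case: (Hnx (nx (iter i nx 0%N))).
Qed.

Lemma chain_le (g : nat -> nat) : (forall i, (g i <= g i.+1)%N) ->
  forall a b, (a <= b)%N -> (g a <= g b)%N.
Proof.
move=> h a; elim=> [|b IH]; first by rewrite leqn0 => /eqP ->.
rewrite leq_eqVlt => /orP [/eqP -> //|]; rewrite ltnS => /IH; move/leq_trans; apply; apply: h.
Qed.

Lemma chain_lt (g : nat -> nat) : (forall i, (g i < g i.+1)%N) ->
  forall a b, (a < b)%N -> (g a < g b)%N.
Proof.
move=> h a; elim=> [|b IH]; first by [].
rewrite ltnS leq_eqVlt => /orP [/eqP -> //|] /IH; move/ltn_trans; apply; apply: h.
Qed.

Lemma dickson_aux n (m : nat -> 'X_{1..n}) k : exists phi : nat -> nat,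
  (forall i, (phi i < phi i.+1)%N) /\
  forall i (c : 'I_n), (c < k)%N -> (m (phi i) c <= m (phi i.+1) c)%N.
Proof.
elim: k => [|k [phi [Hp Hc]]]; first by exists id; split.
case: (ltnP k n) => hk; last first.
  exists phi; split=> // i c ck; apply: Hc; exact: (leq_trans (ltn_ord c) hk).
have [psi [Hs Ha]] := nat_subseq (fun i => m (phi i) (Ordinal hk)).
exists (fun i => phi (psi i)); split=> [i|i c].
  exact: chain_lt Hp _ _ (Hs i).
rewrite ltnS leq_eqVlt => /orP [/eqP ec|ck].
  have -> : c = Ordinal hk by apply: val_inj.
  exact: Ha.
apply: (chain_le (g := fun j => m (phi j) c)); last exact: ltnW (Hs i).
by move=> j; apply: Hc.
Qed.

Lemma dickson n (m : nat -> 'X_{1..n}) : exists i j, (i < j)%N /\ (m i <= m j)%MM.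
Proof.
have [phi [Hp Hc]] := dickson_aux m n.
exists (phi 0%N), (phi 1%N); split; first exact: Hp.
by apply/mnm_lepP=> c; apply: Hc.
Qed.

Section Hilb.
Variables (K : fieldType) (n : nat) (q : nat -> {mpoly K[n]}).

Definition inI k (f : {mpoly K[n]}) :=
  exists a : nat -> {mpoly K[n]}, f = \sum_(0 <= j < k) a j * q j.

Lemma inI0 k : inI k 0.
Proof. by exists (fun _ => 0); rewrite big1 // => j _; rewrite mul0r. Qed.

Lemma inID k f g : inI k f -> inI k g -> inI k (f + g).
Proof.
move=> [a ->] [b ->]; exists (fun j => a j + b j).
by rewrite -big_split /=; apply: eq_bigr => j _; rewrite mulrDl.
Qed.

Lemma inIM k c f : inI k f -> inI k (c * f).
Proof.
move=> [a ->]; exists (fun j => c * a j).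
by rewrite mulr_sumr; apply: eq_bigr => j _; rewrite mulrA.
Qed.

Lemma inIZ k c f : inI k f -> inI k (c *: f).
Proof. by move=> h; rewrite -mul_mpolyC; apply: inIM. Qed.

Lemma inIN k f : inI k f -> inI k (- f).
Proof. by move=> h; rewrite -scaleN1r; apply: inIZ. Qed.

Lemma inIS k f : inI k f -> inI k.+1 f.
Proof.
move=> [a ->]; exists (fun j => if (j < k)%N then a j else 0).
rewrite big_nat_recr //= ltnn mul0r addr0.
by apply: eq_big_nat => j /andP [_ ->].
Qed.

Lemma inI_mono k k' f : (k <= k')%N -> inI k f -> inI k' f.
Proof.
move=> le; elim: k' le => [|k' IH]; first by rewrite leqn0 => /eqP ->.
rewrite leq_eqVlt => /orP [/eqP -> //|]; rewrite ltnS => /IH h /h; exact: inIS.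
Qed.

Lemma inIq k : inI k.+1 (q k).
Proof.
exists (fun j => if j == k then 1 else 0).
rewrite big_nat_recr //= eqxx mul1r big1_seq ?add0r // => j.
by rewrite mem_index_iota => /andP [_ /ltn_eqF ->]; rewrite mul0r.
Qed.

Definition MS k (m : 'X_{1..n}) :=
  exists g, inI k g /\ g != 0 /\ (mlead g <= m)%MM.

Lemma stepLM k : (forall m, MS k.+1 m -> MS k m) ->
  forall f, inI k.+1 f -> inI k f.
Proof.
move=> hMS.
suff H : forall mm f, mlead f = mm -> inI k.+1 f -> inI k f.
  by move=> f; apply: H.
elim/(well_founded_ind (@ltom_wf n)) => mm IH f ef hf.
have [->|fn0] := eqVneq f 0; first exact: inI0.
have hm : MS k.+1 (mlead f) by exists f; do 2!split=> //; exact/mnm_lepP.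
have [g [gI [gn0 gle]]] := hMS _ hm.
pose g' := 'X_[mlead f - mlead g] * g.
have Xn0 : 'X_[mlead f - mlead g] != 0 :> {mpoly K[n]}.
  by rewrite -mleadc_eq0 mleadXm mcoeffX eqxx oner_eq0.
have g'n0 : g' != 0 by rewrite mulf_neq0.
have lg' : mlead g' = mlead f by rewrite mleadM // mleadXm submK.
have g'I : inI k g' by apply: inIM.
pose c := mleadc f / mleadc g'.
pose f' := f - c *: g'.
have f'I : inI k.+1 f' by apply: inID => //; apply/inIN/inIS/inIZ.
have ef2 : f = f' + c *: g' by rewrite /f' subrK.
have [f'0|f'n0] := eqVneq f' 0.
  by rewrite ef2 f'0 add0r; apply: inIZ.
rewrite ef2; apply: inID; last exact: inIZ.
apply: (IH (mlead f')) => //; rewrite -ef.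
have le1 : (mlead f' <= mlead f)%O.
  apply: (le_trans (mleadB_le _ _)); rewrite leUidr.
  by apply: (le_trans (mleadZ_le _ _)); rewrite lg'.
rewrite lt_neqAle le1 andbT; apply/negP => /eqP e.
have g'c : mleadc g' != 0 by rewrite mleadc_eq0.
move: f'n0; rewrite -mleadc_eq0 e /f' mcoeffB mcoeffZ.
have -> : g'@_(mlead f) = mleadc g' by rewrite -lg'.
by rewrite /c mulfVK // subrr eqxx.
Qed.

Lemma MS_up k m m' : MS k m -> (m <= m')%MM -> MS k m'.
Proof.
move=> [g [h1 [h2 h3]]] le; exists g; split=> //; split=> //.
apply/mnm_lepP => i; move/mnm_lepP: h3 => /(_ i) h3; move/mnm_lepP: le => /(_ i).
exact: leq_trans.
Qed.

Lemma MS_mono k k' m : (k <= k')%N -> MS k m -> MS k' m.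
Proof. by move=> le [g [h1 h2]]; exists g; split=> //; apply: inI_mono h1. Qed.

Lemma hilbert : exists k, inI k (q k).
Proof.
apply: NNPP => H.
have H1 : forall k, exists m, MS k.+1 m /\ ~ MS k m.
  move=> k; apply: NNPP => H2; apply: H; exists k; apply: stepLM; last exact: inIq.
  by move=> m hm; apply: NNPP => hn; apply: H2; exists m.
pose ms k := proj1_sig (constructive_indefinite_description _ (H1 k)).
have Hms k : MS k.+1 (ms k) /\ ~ MS k (ms k).
  exact: (proj2_sig (constructive_indefinite_description _ (H1 k))).
have [i [j [ij le]]] := dickson ms.
case: (Hms j) => _; apply; apply: MS_up le; apply: MS_mono ij _; exact: (proj1 (Hms i)).
Qed.

End Hilb.

Section Geo.
Variables (K : closedFieldType) (n : nat).
Implicit Types (C W Y Z : pset K n).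

Lemma closed_union C1 C2 : zclosed C1 -> zclosed C2 ->
  zclosed (fun x => C1 x \/ C2 x).
Proof.
move=> [E1 [hE1 iE1]] [E2 [hE2 iE2]].
exists (fun p => exists p1 p2, E1 p1 /\ E2 p2 /\ p = p1 * p2); split.
  move=> p [p1 [p2 [e1 [e2 ->]]]].
  have [d1 h1] := hE1 _ e1; have [d2 h2] := hE2 _ e2.
  exists (d1 + d2)%N; exact: (dhomogM h1 h2).
move=> x; split.
  case=> [/iE1 [nz h]|/iE2 [nz h]]; split=> // p [p1 [p2 [e1 [e2 ->]]]].
    by rewrite mevalM (h _ e1) mul0r.
  by rewrite mevalM (h _ e2) mulr0.
move=> [nz h]; case: (classic (C1 x)) => [c1|nc1]; first by left.
right; apply/iE2; split=> // p2 e2.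
have [p1 [e1 np1]] : exists p1, E1 p1 /\ meval x p1 != 0.
  apply: NNPP => hn; apply: nc1; apply/iE1; split=> // p1 e1.
  by apply/eqP; apply: NNPP => hh; apply: hn; exists p1; split=> //; apply/negP.
have := h (p1 * p2) (ex_intro _ p1 (ex_intro _ p2 (conj e1 (conj e2 erefl)))).
by rewrite mevalM => /eqP; rewrite mulf_eq0 (negbTE np1) /= => /eqP.
Qed.

Lemma closed_inter C1 C2 : zclosed C1 -> zclosed C2 ->
  zclosed (fun x => C1 x /\ C2 x).
Proof.
move=> [E1 [hE1 iE1]] [E2 [hE2 iE2]].
exists (fun p => E1 p \/ E2 p); split.
  by move=> p [/hE1|/hE2].
move=> x; split.
  move=> [/iE1 [nz h1] /iE2 [_ h2]]; split=> // p [/h1|/h2] //.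
move=> [nz h]; split; [apply/iE1|apply/iE2]; split=> // p hp; apply: h; tauto.
Qed.

Lemma closed_empty : zclosed (fun _ : vec K n => False).
Proof.
exists (fun p => p = 1); split.
  by move=> p ->; exists 0%N; apply: dhomog1.
move=> x; split=> // [[_ h]]; have := h 1 erefl; rewrite meval1 => /eqP.
by rewrite oner_eq0.
Qed.

Definition Eof C (h : zclosed C) := proj1_sig (constructive_indefinite_description _ h).
Lemma EofP C (h : zclosed C) : forall x, C x <->
   ((exists i, x i != 0) /\ forall p, Eof h p -> meval x p = 0).
Proof. exact: (proj2 (proj2_sig (constructive_indefinite_description _ h))). Qed.

Lemma noeth_ind (P : pset K n -> Prop) :
  (forall W, zclosed W -> (forall W', zclosed W' -> psubset W' W -> ~ psubset W W' -> P W') -> P W) ->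
  forall W, zclosed W -> P W.
Proof.
move=> hind W0 cW0; apply: NNPP => nP0.
pose S := {W : pset K n | zclosed W /\ ~ P W}.
have hstep : forall s : S, exists s' : S,
    psubset (proj1_sig s') (proj1_sig s) /\ ~ psubset (proj1_sig s) (proj1_sig s').
  move=> [W [cW nP]] /=; apply: NNPP => hn; apply: nP; apply: hind => // W' cW' sub nsub.
  apply: NNPP => nP'; apply: hn; by exists (exist _ W' (conj cW' nP')).
pose step s := proj1_sig (constructive_indefinite_description _ (hstep s)).
have Hstep s := proj2_sig (constructive_indefinite_description _ (hstep s)).
pose c k := iter k step (exist _ W0 (conj cW0 nP0)).
have csub k : psubset (proj1_sig (c k.+1)) (proj1_sig (c k)) by case: (Hstep (c k)).
have cns k : ~ psubset (proj1_sig (c k)) (proj1_sig (c k.+1)) by case: (Hstep (c k)).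
have cmono j k : (j <= k)%N -> psubset (proj1_sig (c k)) (proj1_sig (c j)).
  elim: k => [|k IH]; first by rewrite leqn0 => /eqP ->.
  rewrite leq_eqVlt => /orP [/eqP -> //|]; rewrite ltnS => /IH h x /csub /h //.
pose cl k : zclosed (proj1_sig (c k)) := proj1 (proj2_sig (c k)).
have hq k : exists p, Eof (cl k.+1) p /\ exists x, proj1_sig (c k) x /\ meval x p != 0.
  apply: NNPP => hn; apply: (cns k) => x cx; apply/(EofP (cl k.+1)); split.
    by case/(EofP (cl k)): cx.
  move=> p ep; apply/eqP; apply: NNPP => hh; apply: hn; exists p; split=> //.
  by exists x; split=> //; apply/negP.
pose q k := proj1_sig (constructive_indefinite_description _ (hq k)).
have Hq k : Eof (cl k.+1) (q k) /\ exists x, proj1_sig (c k) x /\ meval x (q k) != 0.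
  exact: (proj2_sig (constructive_indefinite_description _ (hq k))).
have [k [a ea]] := hilbert q.
case: (Hq k) => _ [x [cx]]; rewrite ea; apply/negP/negPn/eqP.
rewrite (@raddf_sum _ _ (meval x)) big1_seq // => j; rewrite mem_index_iota => /andP [_ jk].
have e : (a j * q j).@[x] = (a j).@[x] * (q j).@[x] := mevalM x (a j) (q j).
apply: (etrans e); have cxj := cmono j.+1 k jk x cx.
have := (proj1 (EofP (cl j.+1) x) cxj); case=> _ /(_ _ (proj1 (Hq j))) ->.
by rewrite mulr0.
Qed.


Lemma decomp W : zclosed W -> exists s : list (pset K n),
  (forall Y, List.In Y s -> zclosed Y /\ irreducible Y /\ psubset Y W) /\
  (forall x, W x -> exists Y, List.In Y s /\ Y x).
Proof.
move: W; apply: noeth_ind => W cW IH.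
case: (classic (exists y, W y)) => [ne|emp]; last first.
  by exists [::]; split=> // x wx; exfalso; apply: emp; exists x.
case: (classic (irreducible W)) => [irr|nirr].
  exists [:: W]; split=> [Y [<-|[]]|x wx]; first by split=> //; split.
  by exists W; split=> //; left.
have [C1 [C2 [c1 [c2 [sub [n1 n2]]]]]] : exists C1 C2, zclosed C1 /\ zclosed C2 /\
    psubset W (fun x => C1 x \/ C2 x) /\ ~ psubset W C1 /\ ~ psubset W C2.
  apply: NNPP => hn; apply: nirr; split=> // D1 D2 d1 d2 s.
  case: (classic (psubset W D1)) => [h|h1]; first by left.
  case: (classic (psubset W D2)) => [h|h2]; first by right.
  by exfalso; apply: hn; exists D1, D2.
have [s1 [hs1 cs1]] : exists s, (forall Y, List.In Y s -> zclosed Y /\ irreducible Y /\ psubset Y (fun x => W x /\ C1 x)) /\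
  (forall x, W x /\ C1 x -> exists Y, List.In Y s /\ Y x).
  apply: IH; first exact: closed_inter.
    by move=> x [].
  by move=> h; apply: n1 => x /h [].
have [s2 [hs2 cs2]] : exists s, (forall Y, List.In Y s -> zclosed Y /\ irreducible Y /\ psubset Y (fun x => W x /\ C2 x)) /\
  (forall x, W x /\ C2 x -> exists Y, List.In Y s /\ Y x).
  apply: IH; first exact: closed_inter.
    by move=> x [].
  by move=> h; apply: n2 => x /h [].
exists (s1 ++ s2); split.
  move=> Y /List.in_app_iff [/hs1|/hs2] [h1 [h2 h3]]; do 2!split=> //; move=> x /h3 []//.
move=> x wx; case: (sub x wx) => cx.
  by have [Y [iY Yx]] := cs1 x (conj wx cx); exists Y; split=> //; apply/List.in_app_iff; left.
by have [Y [iY Yx]] := cs2 x (conj wx cx); exists Y; split=> //; apply/List.in_app_iff; right.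
Qed.

Lemma complement W Y : zclosed W -> irr_component W Y ->
  exists Z, zclosed Z /\ psubset W (fun x => Y x \/ Z x) /\ ~ psubset Y Z.
Proof.
move=> cW [cY [irrY [YW maxY]]].
have [s [hs cs]] := decomp cW.
suff [Z [cZ [sZ nZ]]] : exists Z, zclosed Z /\
    (forall x, (exists Y', List.In Y' s /\ Y' x) -> Y x \/ Z x) /\ ~ psubset Y Z.
  by exists Z; split=> //; split=> // x /cs /sZ.
elim: s hs {cs} => [|Y0 s IH] hs.
  exists (fun _ => False); split; first exact: closed_empty.
  split; first by move=> x [? [[]]].
  by case: irrY => [[y yy]] _ h; apply: (h y yy).
have [Z' [cZ' [sZ' nZ']]] : exists Z, zclosed Z /\
    (forall x, (exists Y', List.In Y' s /\ Y' x) -> Y x \/ Z x) /\ ~ psubset Y Z.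
  by apply: IH => Y' h; apply: hs; right.
have [c0 [i0 s0]] := hs Y0 (or_introl erefl).
case: (classic (psubset Y Y0)) => [YY0|nYY0].
  have Y0Y := maxY Y0 c0 i0 YY0 s0.
  exists Z'; split=> //; split=> // x [Y' [[<-|iY'] Y'x]]; first by left; apply: Y0Y.
  by apply: sZ'; exists Y'.
exists (fun x => Y0 x \/ Z' x); split; first exact: closed_union.
split.
  move=> x [Y' [[<-|iY'] Y'x]]; first by right; left.
  by case: (sZ' x (ex_intro _ Y' (conj iY' Y'x))); [left|right; right].
by move=> h; case: (proj2 irrY _ _ c0 cZ' h).
Qed.
End Geo.

Section H.
Variables (K : closedFieldType) (n : nat).

Lemma meval_homog (x : vec K n) (c : K) d (p : {mpoly K[n]}) :
  p \is [in K[n], d.-homog] -> meval (fun i => c * x i) p = c ^+ d * meval x p.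
Proof.
move=> /dhomog_mf hp; rewrite !mevalE mulr_sumr; apply: eq_big_seq => m hm.
rewrite mulrCA; congr (_ * _).
under eq_bigr do rewrite exprMn.
rewrite big_split /= prodrXr; congr (_ ^+ _ * _).
rewrite -(hp m hm); exact: (esym (mdegE m)).
Qed.

Lemma poly_comp (P : 'I_n -> {poly K}) (q : {mpoly K[n]}) :
  exists H : {poly K}, forall s, H.[s] = meval (fun i => (P i).[s]) q.
Proof.
exists (\sum_(m <- msupp q) (q@_m)%:P * \prod_(i < n) (P i) ^+ m i) => s.
rewrite mevalE horner_sum; apply: eq_bigr => m _.
by rewrite hornerE horner_prod; congr (_ * _); apply: eq_bigr => i _; rewrite horner_exp.
Qed.

Lemma nonroot_nz (P : {poly K}) : P != 0 -> exists s, s != 0 /\ P.[s] != 0.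
Proof.
move=> Pn0; have : 'X * P != 0 by rewrite mulf_neq0 ?polyX_eq0.
case/closed_nonrootP => s; rewrite /root hornerE hornerX mulf_eq0 negb_or => /andP [h1 h2].
by exists s.
Qed.

Lemma cone_closed (C : pset K n) (x : vec K n) (c : K) :
  zclosed C -> C x -> c != 0 -> C (fun i => c * x i).
Proof.
move=> [E [hE iE]] /iE [[i xi] h] cn0; apply/iE; split.
  by exists i; rewrite mulf_neq0.
move=> p ep; have [d hd] := hE p ep; by rewrite (meval_homog _ _ hd) h // mulr0.
Qed.

Lemma proj_closed (C : pset K n) (x y : vec K n) :
  zclosed C -> proj x y -> C x -> C y.
Proof.
move=> cC [_ [c [cn0 e]]] Cx.
have -> : y = (fun i => c * x i) by apply: functional_extensionality.
exact: cone_closed.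
Qed.

Lemma proj_closed_rev (C : pset K n) (x y : vec K n) :
  zclosed C -> proj x y -> C y -> C x.
Proof.
move=> cC [_ [c [cn0 e]]] Cy.
have -> : x = (fun i => c^-1 * y i).
  by apply: functional_extensionality => i; rewrite e mulrA mulVf // mul1r.
by apply: cone_closed => //; rewrite invr_eq0.
Qed.

Lemma proj_nz1 (x y : vec K n) : proj x y -> exists i, x i != 0.
Proof. by case. Qed.

Lemma proj_nz2 (x y : vec K n) : proj x y -> exists i, y i != 0.
Proof. by move=> [[i xi] [c [cn0 e]]]; exists i; rewrite e mulf_neq0. Qed.

End H.

Section A.
Variables (K : closedFieldType) (n r : nat) (w : 'I_n -> 'I_r -> int) (lam : 'I_r -> int).

Lemma Sof_torus (s : K) : s != 0 -> torus_elt (Sof lam s).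
Proof. by move=> sn0 j; rewrite /Sof expfz_neq0. Qed.

Lemma act_comp (s s0 : K) (a : vec K n) :
  act w (Sof lam s) (act w (Sof lam s0) a) = act w (Sof lam (s * s0)) a.
Proof.
apply: functional_extensionality => i; rewrite /act mulrA; congr (_ * _).
rewrite /chi -big_split /=; apply: eq_bigr => j _.
by rewrite /Sof expfzMl expfzMl.
Qed.

Lemma act_1 (a : vec K n) : act w (Sof lam 1) a = a.
Proof.
apply: functional_extensionality => i; rewrite /act /chi /Sof.
by rewrite big1 ?mul1r // => j _; rewrite !exp1rz.
Qed.
End A.

Lemma EofH (K : closedFieldType) n (C : pset K n) (h : zclosed C) :
  forall p, Eof h p -> exists d : nat, p \is [in K[n], d.-homog].
Proof. exact: (proj1 (proj2_sig (constructive_indefinite_description _ h))). Qed.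

Lemma closure_closed (K : closedFieldType) n (A : pset K n) : zclosed (zclosure A).
Proof.
exists (fun p => exists C (h : zclosed C), psubset A C /\ Eof h p); split.
  by move=> p [C [h [_ /EofH]]].
move=> x; split.
  move=> [nz hx]; split=> // p [C [h [sub ep]]].
  by have [_ ] := proj1 (EofP h x) (hx C h sub); apply.
move=> [nz hx]; split=> // C h sub; apply/(EofP h); split=> // p ep.
by apply: hx; exists C, h.
Qed.

Theorem lemma3p3 (K : closedFieldType) (n r : nat) (w : 'I_n -> 'I_r -> int)
    (lam : 'I_r -> int) (X : pset K n) :
  zclosed X ->
  (forall t x, torus_elt t -> X x -> X (act w t x)) ->
  pfinite (Tfixed w X) ->
  (forall f, Sfixed w lam X f <-> Tfixed w X f) ->
  (forall Y, irr_component X Y ->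
     forall f, supporting w lam Y f -> supporting w lam X f) /\
  (forall f, Tfixed w X f ->
     forall Y, irr_component (zclosure (BBstratum w lam X f)) Y -> Y f).
Proof.
move=> cX inv _ _; split.
  move=> Y hY f [[Yf Tf] [U [[C1 [cC1 iU]] [[u Uu] sU]]]].
  have [Z [cZ [sXZ nYZ]]] := complement cX hY.
  case: hY => [cY [irrY [YX _]]].
  split; first by split=> //; apply: YX.
  exists (fun x => X x /\ ~ (C1 x \/ Z x)); split.
    exists (fun x => C1 x \/ Z x); split; first exact: closed_union.
    by move=> x.
  split.
    have [y [Yy nC]] : exists y, Y y /\ ~ (C1 y \/ Z y).
      apply: NNPP => hn; case: (proj2 irrY C1 Z cC1 cZ).
      - by move=> y Yy; apply: NNPP => hh; apply: hn; exists y.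
      - move=> h; have [Yu nC1u] := proj1 (iU u) Uu; exact: nC1u (h u Yu).
      - exact: nYZ.
    by exists y; split=> //; apply: YX.
  move=> x [Xx nC].
  have Yx : Y x by case: (sXZ x Xx) => // Zx; exfalso; apply: nC; right.
  have Ux : U x by apply/iU; split=> // c1; apply: nC; left.
  by have [_ lim] := sU x Ux; split.
move=> f Tf Y hY.
have cW := closure_closed (BBstratum w lam X f).
have [Z [cZ [sWZ nYZ]]] := complement cW hY.
case: hY => [cY [irrY [YW _]]].
have [a [[Xa [p [pnz [porb pf]]]] nZa]] : exists a, BBstratum w lam X f a /\ ~ Z a.
  apply: NNPP => hn; apply: nYZ => y Yy.
  case: (YW y Yy) => _ h; apply: h cZ _ => z Az; apply: NNPP => nz; apply: hn; by exists z.
have hW : forall s, s != 0 -> zclosure (BBstratum w lam X f) (fun i => (p i).[s]).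
  move=> s sn0; split; first exact: pnz.
  move=> C cC sub; apply: (proj_closed cC (porb s sn0)); apply: sub; split.
    by apply: inv => //; apply: Sof_torus.
  exists (fun i => (p i) \Po ('X * s%:P)); split.
    move=> b; have [i hi] := pnz (b * s); exists i; by rewrite horner_comp !hornerE.
  split.
    move=> s' s'n0; rewrite act_comp.
    have -> : (fun i => ((p i) \Po ('X * s%:P)).[s']) = (fun i => (p i).[s' * s]).
      by apply: functional_extensionality => i; rewrite horner_comp !hornerE.
    by apply: porb; rewrite mulf_neq0.
  have -> : (fun i => ((p i) \Po ('X * s%:P)).[0]) = (fun i => (p i).[0]).
    by apply: functional_extensionality => i; rewrite horner_comp !hornerE ?mul0r.
  exact: pf.
have nZp1 : ~ Z (fun i => (p i).[1]).
  move=> h; apply: nZa; have := proj_closed_rev cZ (porb 1 (oner_neq0 _)) h.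
  by rewrite act_1.
have [q [eq nq]] : exists q, Eof cZ q /\ meval (fun i => (p i).[1]) q != 0.
  apply: NNPP => hn; apply: nZp1; apply/(EofP cZ); split; first exact: pnz.
  move=> q eq; apply/eqP; apply: NNPP => hh; apply: hn; exists q; split=> //; exact/negP.
have [G eG] := poly_comp p q.
have Gn0 : G != 0 by apply/negP => /eqP G0; move: nq; rewrite -eG G0 horner0 eqxx.
move: pf => [fnz [c [cn0 ec]]].
apply/(EofP cY); split=> // q' eq'.
have [H eH] := poly_comp p q'.
have H0 : H = 0.
  apply: NNPP => /eqP Hn0; have [s [sn0 hs]] := nonroot_nz (mulf_neq0 Gn0 Hn0).
  move: hs; rewrite hornerM mulf_eq0 negb_or => /andP [gs hs].
  case: (sWZ _ (hW s sn0)) => h.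
    by move: hs; rewrite eH (proj2 (proj1 (EofP cY _) h) q' eq') eqxx.
  by move: gs; rewrite eG (proj2 (proj1 (EofP cZ _) h) q eq) eqxx.
have := eH 0; rewrite H0 horner0.
have -> : (fun i => (p i).[0]) = (fun i => c * f i).
  by apply: functional_extensionality => i; rewrite ec.
have [d hd] := EofH eq'; rewrite (meval_homog _ _ hd) => /esym /eqP.
by rewrite mulf_eq0 expf_eq0 (negbTE cn0) andbF /= => /eqP.
Qed.
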